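(* The homomorphism $\mu:\mathrm{PSL}(2,\mathbb{Z})\to\mathrm{PGL}(2,\mathbb{Z}[t,t^{-1},(1+t)^{-1}])$ is injective.
   Context: Matrices in square brackets denote their classes in projective linear groups (quotients of $\mathrm{GL}_2$ by unit scalars). $\mu$ is the group homomorphism determined by $\mu\left[\begin{smallmatrix}1&0\\1&1\end{smallmatrix}\right]=\left[\begin{smallmatrix}1&0\\0&-t\end{smallmatrix}\right]$ and $\mu\left[\begin{smallmatrix}1&-1\\0&1\end{smallmatrix}\right]=\left[\begin{smallmatrix}-\frac{t^2}{1+t}&\frac{t}{1+t}\\ \frac{1+t+t^2}{1+t}&\frac{1}{1+t}\end{smallmatrix}\right]$ (these images satisfy the defining relations $s_1s_2s_1=s_2s_1s_2$, $(s_1s_2s_1)^2=1$ of $\mathrm{PSL}(2,\mathbb{Z})$ with $s_1=\left[\begin{smallmatrix}1&-1\\0&1\end{smallmatrix}\right]$, $s_2=\left[\begin{smallmatrix}1&0\\1&1\end{smallmatrix}\right]$, so $\mu$ is well defined). *)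

(* Defs.v *)
From HB Require Import structures.
From mathcomp Require Import all_boot all_order all_algebra.
Set Implicit Arguments. Unset Strict Implicit. Unset Printing Implicit Defensive.
Import Order.TTheory GRing.Theory Num.Theory.
Local Open Scope ring_scope.

(* The ring Z[t, t^-1, (1+t)^-1] is viewed inside its fraction field
   Q(t) = {fraction {poly int}}. *)
Definition Ft := {fraction {poly int}}.
Definition tt_ : Ft := FracField.tofrac ('X : {poly int}).

(* Generators of PSL(2,Z) (representatives in SL(2,Z)). *)
Definition s1Z : 'M[int]_2 := \matrix_(i < 2, j < 2)
  (if i == 0 :> nat then (if j == 0 :> nat then 1 else -1)
   else (if j == 0 :> nat then 0 else 1)).
Definition s2Z : 'M[int]_2 := \matrix_(i < 2, j < 2)
  (if i == 0 :> nat then (if j == 0 :> nat then 1 else 0) else 1).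

(* Representatives in GL_2 of the images mu[s1], mu[s2]. *)
Definition mu_s2 : 'M[Ft]_2 := \matrix_(i < 2, j < 2)
  (if i == 0 :> nat then (if j == 0 :> nat then 1 else 0)
   else (if j == 0 :> nat then 0 else - tt_)).
Definition mu_s1 : 'M[Ft]_2 := \matrix_(i < 2, j < 2)
  (if i == 0 :> nat then
     (if j == 0 :> nat then - tt_ ^+ 2 / (1 + tt_) else tt_ / (1 + tt_))
   else
     (if j == 0 :> nat then (1 + tt_ + tt_ ^+ 2) / (1 + tt_) else 1 / (1 + tt_))).

(* Words in s1, s2 and their inverses: (true, _) is s1, (false, _) is s2;
   the second component says whether the letter is inverted. *)
Definition letterZ (l : bool * bool) : 'M[int]_2 :=
  let M := if l.1 then s1Z else s2Z in if l.2 then invmx M else M.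
Definition letterMu (l : bool * bool) : 'M[Ft]_2 :=
  let M := if l.1 then mu_s1 else mu_s2 in if l.2 then invmx M else M.

Definition wordZ (w : seq (bool * bool)) : 'M[int]_2 :=
  foldr (fun l M => letterZ l *m M) 1%:M w.
Definition wordMu (w : seq (bool * bool)) : 'M[Ft]_2 :=
  foldr (fun l M => letterMu l *m M) 1%:M w.

(* [wordZ w] is the identity of PSL(2,Z) iff wordZ w = +-1;
   mu [wordZ w] is the identity of PGL_2 iff wordMu w is a scalar matrix. *)
Definition trivial_in_PSL2Z (M : 'M[int]_2) : Prop := M = 1%:M \/ M = - 1%:M.
Definition trivial_in_PGL2 (M : 'M[Ft]_2) : Prop := exists c : Ft, M = c%:M.

(* Main.v *)
Require Import Defs.
From HB Require Import structures.
From mathcomp Require Import all_boot all_order all_algebra.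
From mathcomp Require Import ring lra zify.
Set Implicit Arguments. Unset Strict Implicit. Unset Printing Implicit Defensive.
Import Order.TTheory GRing.Theory Num.Theory.
Local Open Scope ring_scope.

Section Mx2.
Variable R : comNzRingType.
Definition mx2 (a b c d : R) : 'M[R]_2 := \matrix_(i < 2, j < 2)
  (if i == 0 :> nat then (if j == 0 :> nat then a else b)
   else (if j == 0 :> nat then c else d)).

Lemma ord2P (P : 'I_2 -> Prop) : P 0 -> P 1 -> forall i, P i.
Proof. by move=> P0 P1 [[|[|//]] Hi]; [ have -> : Ordinal Hi = 0 by apply: val_inj | have -> : Ordinal Hi = 1 by apply: val_inj]. Qed.

Lemma mx2E (M : 'M[R]_2) : M = mx2 (M 0 0) (M 0 1) (M 1 0) (M 1 1).
Proof. by apply/matrixP=> i j; elim/ord2P: i; elim/ord2P: j; rewrite !mxE. Qed.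

Lemma mx2_00 a b c d : mx2 a b c d 0 0 = a. Proof. by rewrite mxE. Qed.
Lemma mx2_01 a b c d : mx2 a b c d 0 1 = b. Proof. by rewrite mxE. Qed.
Lemma mx2_10 a b c d : mx2 a b c d 1 0 = c. Proof. by rewrite mxE. Qed.
Lemma mx2_11 a b c d : mx2 a b c d 1 1 = d. Proof. by rewrite mxE. Qed.

Lemma mulmx2E (M N : 'M[R]_2) i j : (M *m N) i j = M i 0 * N 0 j + M i 1 * N 1 j.
Proof. rewrite mxE !big_ord_recl big_ord0 addr0. have -> : lift ord0 (ord0 : 'I_1) = 1 by apply: val_inj. by []. Qed.

Lemma mx2_mul a b c d a' b' c' d' : mx2 a b c d *m mx2 a' b' c' d' =
  mx2 (a*a' + b*c') (a*b' + b*d') (c*a'+d*c') (c*b'+d*d').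
Proof. by apply/matrixP=> i j; elim/ord2P: i; elim/ord2P: j; rewrite mulmx2E !mxE. Qed.

Lemma mx2_scalar c : c%:M = mx2 c 0 0 c.
Proof. by apply/matrixP=> i j; elim/ord2P: i; elim/ord2P: j; rewrite !mxE. Qed.

Lemma mx2_scale k a b c d : k *: mx2 a b c d = mx2 (k*a) (k*b) (k*c) (k*d).
Proof. by apply/matrixP=> i j; elim/ord2P: i; elim/ord2P: j; rewrite !mxE. Qed.

Definition act (M : 'M[R]_2) (v : R * R) := (M 0 0 * v.1 + M 0 1 * v.2, M 1 0 * v.1 + M 1 1 * v.2).
Lemma actM M N v : act (M *m N) v = act M (act N v).
Proof. rewrite /act !mulmx2E /=; congr pair; ring. Qed.

Definition det2 (M : 'M[R]_2) := M 0 0 * M 1 1 - M 0 1 * M 1 0.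
Lemma det2M M N : det2 (M *m N) = det2 M * det2 N.
Proof. rewrite /det2 !mulmx2E; ring. Qed.
End Mx2.

Lemma map_mx2 (R S : comNzRingType) (f : R -> S) a b c d :
  map_mx f (mx2 a b c d) = mx2 (f a) (f b) (f c) (f d).
Proof. by apply/matrixP=> i j; elim/ord2P: i; elim/ord2P: j; rewrite !mxE. Qed.

Inductive let3 := LA | LB | LC.
Definition isB x := if x is LA then false else true.

Definition mulA (r : seq let3) := if r is LA :: r' then r' else LA :: r.
Definition mulB (r : seq let3) :=
  match r with LB :: r' => LC :: r' | LC :: r' => r' | _ => LB :: r end.

Definition nfL (l : bool * bool) r :=
  match l with
  | (true, false) => mulB (mulB (mulA r))
  | (false, false) => mulA (mulB (mulB r))
  | (true, true) => mulA (mulB r)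
  | (false, true) => mulB (mulA r)
  end.
Definition nf (w : seq (bool * bool)) := foldr nfL [::] w.

Fixpoint red (r : seq let3) : bool :=
  match r with x :: ((y :: _) as r') => (isB x != isB y) && red r' | _ => true end.

Lemma red_mulA r : red r -> red (mulA r).
Proof. by case: r => [|[] [|y r]] //= /andP[]. Qed.
Lemma red_mulB r : red r -> red (mulB r).
Proof. by case: r => [|[] [|y r]] //= /andP[]. Qed.
Lemma red_nf w : red (nf w).
Proof.
elim: w => [|[[] []] w IH] //=;
  by repeat (apply: red_mulA || apply: red_mulB).
Qed.

Section Eval.
Variable R : comNzRingType.
Variables mA mB mC : 'M[R]_2.
Definition mL x := match x with LA => mA | LB => mB | LC => mC end.
Fixpoint E (r : seq let3) : 'M[R]_2 := if r is x :: r' then mL x *m E r' else 1%:M.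

Variable P : pred R.
Hypothesis P1 : P 1.
Hypothesis PM : forall x y, P x -> P y -> P (x * y).
Variables kA kB : R.
Hypothesis PkA : P kA.
Hypothesis PkB : P kB.
Hypothesis hA : mA *m mA = kA%:M.
Hypothesis hB : mB *m mB = mC.
Hypothesis hC : mB *m mC = kB%:M.

Lemma EmulA r : exists2 k, P k & mA *m E r = k *: E (mulA r).
Proof.
case: r => [|[] r] /=; try by exists 1 => //; rewrite scale1r.
exists kA => //; by rewrite mulmxA hA mul_scalar_mx.
Qed.

Lemma EmulB r : exists2 k, P k & mB *m E r = k *: E (mulB r).
Proof.
case: r => [|[] r] /=; try by exists 1 => //; rewrite scale1r.
- by exists 1 => //; rewrite scale1r mulmxA hB.
- by exists kB => //; rewrite mulmxA hC mul_scalar_mx.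
Qed.

Definition Lw (l : bool * bool) :=
  match l with
  | (true, false) => mB *m (mB *m mA)
  | (false, false) => mA *m (mB *m mB)
  | (true, true) => mA *m mB
  | (false, true) => mB *m mA
  end.

Lemma Estep l r : exists2 k, P k & Lw l *m E r = k *: E (nfL l r).
Proof.
have hA' := EmulA; have hB' := EmulB.
case: l => [[] []] /=; rewrite -?mulmxA.
- have [k1 P1' ->] := hB' r; rewrite -scalemxAr.
  have [k2 P2 ->] := hA' (mulB r); rewrite scalerA.
  by exists (k1 * k2); [exact: PM | rewrite mulrC].
- have [k1 P1' ->] := hA' r; rewrite -!scalemxAr.
  have [k2 P2 ->] := hB' (mulA r); rewrite -!scalemxAr.
  have [k3 P3 ->] := hB' (mulB (mulA r)); rewrite !scalerA.
  by exists (k1 * k2 * k3); first exact: PM (PM P1' P2) P3.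
- have [k1 P1' ->] := hA' r; rewrite -scalemxAr.
  have [k2 P2 ->] := hB' (mulA r); rewrite scalerA.
  by exists (k1 * k2); first exact: PM P1' P2.
- have [k1 P1' ->] := hB' r; rewrite -!scalemxAr.
  have [k2 P2 ->] := hB' (mulB r); rewrite -!scalemxAr.
  have [k3 P3 ->] := hA' (mulB (mulB r)); rewrite !scalerA.
  by exists (k1 * k2 * k3); first exact: PM (PM P1' P2) P3.
Qed.
End Eval.

(* ping-pong at t = -2 *)
Definition rA : 'M[int]_2 := mx2 (-2) (-2) 3 2.
Definition rB : 'M[int]_2 := mx2 (-4) (-4) 3 2.
Definition rC : 'M[int]_2 := mx2 4 8 (-6) (-8).
Definition Er := E rA rB rC.

Definition Q (v : int * int) := v.2 * (3 * v.1 + 2 * v.2).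
Definition sQ (s : bool) v := if s then Q v else - Q v.
Definition outs (r : seq let3) s := if r is x :: _ then ~~ isB x else s.
Definition compat s (r : seq let3) := if r is x :: r' then isB (last x r') == s else true.

Lemma letter_fact x u : 0 < sQ (isB x) u ->
  [/\ 0 < det2 (mL rA rB rC x), 0 < sQ (~~ isB x) (act (mL rA rB rC x) u),
      det2 (mL rA rB rC x) * sQ (isB x) u <= sQ (~~ isB x) (act (mL rA rB rC x) u)
    & isB x -> det2 (mL rA rB rC x) * sQ (isB x) u < sQ (~~ isB x) (act (mL rA rB rC x) u)].
Proof.
case: u => x1 y1.
case: x; rewrite /= /sQ /Q /det2 /act /rA /rB /rC !mxE /= => H.
- split => //; nia.
- have H1 : 3 * x1 + 2 * y1 != 0 by apply/eqP => e; move: H; rewrite e mulr0.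
  have H2 : 0 < (3 * x1 + 2 * y1) ^+ 2 by rewrite exprn_even_gt0. 
  split => //; nia.
- have H1 : y1 != 0 by apply/eqP => e; move: H; rewrite e mul0r.
  have H2 : 0 < y1 ^+ 2 by rewrite exprn_even_gt0.
  split => //; nia.
Qed.

Lemma outs_key x r s : red (x :: r) -> compat s (x :: r) -> outs r s = isB x.
Proof.
case: r => [|y r] /=; first by move=> _ /eqP.
by case/andP; case: x; case: y.
Qed.

Lemma compat_tail x r s : compat s (x :: r) -> compat s r.
Proof. by case: r. Qed.

Lemma red_tail x r : red (x :: r) -> red r.
Proof. by case: r => // y r /= /andP[]. Qed.

Lemma act1 (v : int * int) : act 1%:M v = v.
Proof. by case: v => a b; rewrite /act !mxE /=; congr pair; ring. Qed.

Lemma pp r s v : red r -> compat s r -> 0 < sQ s v ->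
  [/\ 0 < det2 (Er r), 0 < sQ (outs r s) (act (Er r) v),
      det2 (Er r) * sQ s v <= sQ (outs r s) (act (Er r) v)
    & has isB r -> det2 (Er r) * sQ s v < sQ (outs r s) (act (Er r) v)].
Proof.
elim: r => [|x r IH] Hr Hc Hv.
  rewrite /= act1 /det2 !mxE /=; split => //; rewrite mul1r //.
have [d0 pos le lt] := IH (red_tail Hr) (compat_tail Hc) Hv.
have key := outs_key Hr Hc.
rewrite key in pos le lt.
have [dx posx lex ltx] := letter_fact pos.
rewrite /Er /= actM det2M -/(Er r).
set a := sQ _ _ in posx lex ltx *.
set b := sQ (isB x) _ in pos le lt lex ltx *.
set c := sQ s v in Hv le lt *.
set D := det2 (mL rA rB rC x) in dx lex ltx *.
set d := det2 (Er r) in d0 le lt *.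
split.
- by rewrite pmulr_rgt0.
- by [].
- nia.
- rewrite /= => /orP[/ltx h | /lt h]; nia.
Qed.

Lemma pingpong r : red r -> Er r 0 1 = 0 -> Er r 1 0 = 0 -> Er r 0 0 = Er r 1 1 -> r = [::].
Proof.
case: r => // x r' Hr e01 e10 e00.
case Hh: (has isB (x :: r')); last first.
  exfalso; suff E1 : x :: r' = [:: LA] by move: e01; rewrite E1 /= mulmx1 /rA !mxE.
  by move: Hh Hr; clear e01 e10 e00; case: x => //; case: r' => [|y r''] //=; case: y.
have Hc : compat (isB (last x r')) (x :: r') by rewrite /= eqxx.
move: Hc; move: (isB (last x r')) => s Hc.
have Hv : 0 < sQ s (if s then (1, 1) else (1, -1)) by case: s {Hc}.
have [d0 pos le lt] := pp Hr Hc Hv.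
have {lt} lt := lt Hh.
move: d0 lt; rewrite /det2 /act e01 e10 -e00.
move: (Er (x :: r') 0 0) (outs (x :: r') s) => c o.
rewrite /sQ /Q; clear le pos Hv Hc.
case: s; case: o => /=; nia.
Qed.

Lemma invmx_eq (R : comUnitRingType) n (A B : 'M[R]_n) : A *m B = 1%:M -> invmx A = B.
Proof.
move=> h; have [uA _] := mulmx1_unit h.
by rewrite -[invmx A]mulmx1 -h mulmxA mulVmx ?mul1mx.
Qed.

Definition zA : 'M[int]_2 := mx2 0 (-1) 1 0.
Definition zB : 'M[int]_2 := mx2 0 (-1) 1 1.
Definition zC : 'M[int]_2 := mx2 (-1) (-1) 1 0.
Definition Ez := E zA zB zC.

Lemma s1Z_eq : s1Z = mx2 1 (-1) 0 1. Proof. by []. Qed.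
Lemma s2Z_eq : s2Z = mx2 1 0 1 1.
Proof. by apply/matrixP=> i j; elim/ord2P: i; elim/ord2P: j; rewrite !mxE. Qed.

Lemma letterZ_eq l : letterZ l = - Lw zA zB l.
Proof.
case: l => [[] []]; rewrite /letterZ /= ?s1Z_eq ?s2Z_eq /zA /zB /zC ?mx2_mul.
- by apply: invmx_eq; rewrite -scaleN1r mx2_scale mx2_mul mx2_scalar.
- by rewrite -scaleN1r mx2_scale.
- by apply: invmx_eq; rewrite -scaleN1r mx2_scale mx2_mul mx2_scalar.
- by rewrite -scaleN1r mx2_scale.
Qed.

Lemma wordZ_nf w : exists2 k : int, k * k = 1 & wordZ w = k *: Ez (nf w).
Proof.
elim: w => [|l w [k hk IH]]; first by exists 1 => //; rewrite scale1r.
have PM : forall x y : int, x * x == 1 -> y * y == 1 -> x * y * (x * y) == 1.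
  by move=> x y /eqP hx /eqP hy; rewrite mulrACA hx hy mulr1.
have [k' hk' e] := @Estep _ zA zB zC [pred k : int | k * k == 1] (erefl _) PM (-1) (-1)
  (erefl _) (erefl _) ltac:(by rewrite /zA mx2_mul mx2_scalar) ltac:(by rewrite /zB /zC mx2_mul) ltac:(by rewrite /zB /zC mx2_mul mx2_scalar) l (nf w).
exists (- k * k').
  by move/eqP: hk'; rewrite /= => hk'; rewrite mulrACA mulrNN hk hk' mulr1.
rewrite /= IH letterZ_eq -scalemxAr mulNmx /Ez e -scaleN1r !scalerA.
by congr (_ *: _); ring.
Qed.

Notation tf := (@FracField.tofrac _ : {poly int} -> Ft).

Lemma tt_neq0 : tt_ != 0.
Proof. by rewrite /tt_ tofrac_eq0 polyX_eq0. Qed.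

Lemma ttD1_neq0 : 1 + tt_ != 0.
Proof.
have -> : 1 + tt_ = tf (1 + 'X) by rewrite rmorphD rmorph1.
rewrite tofrac_eq0; apply/eqP => h.
by have := congr1 (fun p : {poly int} => p`_1) h; rewrite coefD coef1 coefX coef0.
Qed.

Definition Pl (l : bool * bool) : 'M[{poly int}]_2 :=
  match l with
  | (true, false) => mx2 (- 'X^2) 'X (1 + 'X + 'X^2) 1
  | (false, false) => mx2 1 0 0 (- 'X)
  | (true, true) => mx2 1 (- 'X) (- (1 + 'X + 'X^2)) (- 'X^2)
  | (false, true) => mx2 (- 'X) 0 0 1
  end.
Definition lam (l : bool * bool) : Ft :=
  match l with
  | (true, false) => (1 + tt_)^-1
  | (false, false) => 1
  | (true, true) => - (tt_ * (1 + tt_))^-1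
  | (false, true) => - tt_^-1
  end.

Lemma gen_lam_neq0 (F : fieldType) (t : F) : t != 0 -> 1 + t != 0 ->
  [/\ (1 + t)^-1 != 0, - (t * (1 + t))^-1 != 0, - t^-1 != 0 & (1 : F) != 0].
Proof.
move=> h1 h2; split; rewrite ?oppr_eq0 ?invr_eq0 ?mulf_neq0 ?oner_neq0 //.
Qed.

Lemma lam_neq0 l : lam l != 0.
Proof.
have [g1 g2 g3 g4] := gen_lam_neq0 tt_neq0 ttD1_neq0.
(case: l => [[] []]; [exact: g2 | exact: g1 | exact: g3 | exact: g4]).
Qed.

Lemma tfX : tf 'X = tt_. Proof. by []. Qed.

Section Gen.
Variable F : fieldType.
Variable t : F.
Hypothesis t0 : t != 0.
Hypothesis t1 : 1 + t != 0.
Lemma gen_inv1 : mx2 (- t ^+ 2 / (1 + t)) (t / (1 + t)) ((1 + t + t ^+ 2) / (1 + t)) (1 / (1 + t)) *m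
   (- (t * (1 + t))^-1 *: mx2 1 (- t) (- (1 + t + t ^+ 2)) (- t ^+ 2)) = 1%:M.
Proof. rewrite mx2_scale mx2_mul mx2_scalar; congr mx2; field; by rewrite ?t0 ?t1. Qed.
Lemma gen_inv2 : mx2 1 0 0 (- t) *m (- t^-1 *: mx2 (- t) 0 0 1) = 1%:M.
Proof. rewrite mx2_scale mx2_mul mx2_scalar; congr mx2; field; by rewrite ?t0 ?t1. Qed.
Lemma gen_eq1 : mx2 (- t ^+ 2 / (1 + t)) (t / (1 + t)) ((1 + t + t ^+ 2) / (1 + t)) (1 / (1 + t)) =
  (1 + t)^-1 *: mx2 (- t ^+ 2) t (1 + t + t ^+ 2) 1.
Proof. rewrite mx2_scale; congr mx2; field; by rewrite ?t0 ?t1. Qed.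
Lemma gen_invmx1 : invmx (mx2 (- t ^+ 2 / (1 + t)) (t / (1 + t)) ((1 + t + t ^+ 2) / (1 + t)) (1 / (1 + t))) =
   - (t * (1 + t))^-1 *: mx2 1 (- t) (- (1 + t + t ^+ 2)) (- t ^+ 2).
Proof. apply: invmx_eq; exact: gen_inv1. Qed.
Lemma gen_invmx2 : invmx (mx2 1 0 0 (- t)) = - t^-1 *: mx2 (- t) 0 0 1.
Proof. apply: invmx_eq; exact: gen_inv2. Qed.
Lemma gen_eq2 : mx2 1 0 0 (- t) = 1 *: mx2 1 0 0 (- t).
Proof. by rewrite scale1r. Qed.
End Gen.

Lemma mapPl l : map_mx tf (Pl l) = match l with
  | (true, false) => mx2 (- tt_ ^+ 2) tt_ (1 + tt_ + tt_ ^+ 2) 1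
  | (false, false) => mx2 1 0 0 (- tt_)
  | (true, true) => mx2 1 (- tt_) (- (1 + tt_ + tt_ ^+ 2)) (- tt_ ^+ 2)
  | (false, true) => mx2 (- tt_) 0 0 1
  end.
Proof.
by case: l => [[] []]; rewrite /Pl map_mx2 ?rmorphN ?rmorphD ?rmorphXn ?rmorph1 ?rmorph0 ?tfX.
Qed.

Lemma letterMu_eq l : letterMu l = lam l *: map_mx tf (Pl l).
Proof.
have h1 := tt_neq0; have h2 := ttD1_neq0.
have e1 : mu_s1 = mx2 (- tt_ ^+ 2 / (1 + tt_)) (tt_ / (1 + tt_))
   ((1 + tt_ + tt_ ^+ 2) / (1 + tt_)) (1 / (1 + tt_)).
by [].
have e2 : mu_s2 = mx2 1 0 0 (- tt_) by [].
rewrite mapPl; case: l => [[] []]; rewrite /letterMu /= ?e1 ?e2.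
- exact: (gen_invmx1 tt_neq0 ttD1_neq0).
- exact: gen_eq1.
- exact: (gen_invmx2 tt_neq0).
- exact: gen_eq2.
Qed.

Definition PW (w : seq (bool * bool)) : 'M[{poly int}]_2 :=
  foldr (fun l M => Pl l *m M) 1%:M w.

Lemma wordMu_eq w : exists2 c : Ft, c != 0 & wordMu w = c *: map_mx tf (PW w).
Proof.
elim: w => [|l w [c hc IH]].
  exists 1; first exact: oner_neq0.
  by rewrite scale1r /= map_mx1.
exists (lam l * c); first exact: (mulf_neq0 (lam_neq0 l) hc).
rewrite /= IH letterMu_eq /= map_mxM -scalemxAr -scalemxAl scalerA.
by rewrite [c * _]mulrC.
Qed.

Notation ev := (horner_eval (-2 : int)).

Definition pl (l : bool * bool) : int :=
  match l with
  | (true, false) => -4 | (false, false) => 4 | (true, true) => 2 | (false, true) => -2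
  end.

Lemma Lw_ev l : Lw rA rB l = pl l *: map_mx ev (Pl l).
Proof.
case: l => [[] []]; rewrite /Lw /Pl /rA /rB map_mx2 /horner_eval !hornerE !mx2_mul mx2_scale /=; by [].
Qed.

Lemma rho_inv w : exists p q : int, [/\ p != 0, q != 0 & p *: map_mx ev (PW w) = q *: Er (nf w)].
Proof.
have PM : forall x y : int, x != 0 -> y != 0 -> x * y != 0 by move=> x y; exact: mulf_neq0.
elim: w => [|l w [p [q [hp hq IH]]]].
  by exists 1, 1; rewrite /= map_mx1.
have [k hk e] := @Estep _ rA rB rC [pred k : int | k != 0] (erefl _) PM (-2) 8
  (erefl _) (erefl _) ltac:(by rewrite /rA mx2_mul mx2_scalar) ltac:(by rewrite /rB /rC mx2_mul)
  ltac:(by rewrite /rB /rC mx2_mul mx2_scalar) l (nf w).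
exists (pl l * p), (q * k); split.
- by apply: PM => //; clear e; case: l => [[] []].
- exact: PM.
rewrite /= map_mxM -scalerA scalemxAr scalemxAl.
rewrite [X in X *m _](_ : _ = Lw rA rB l); last by rewrite Lw_ev.
rewrite [X in _ *m X](_ : _ = q *: Er (nf w)); last by rewrite -IH.
by rewrite -scalemxAr /Er e scalerA.
Qed.


Lemma scal_entries (F : fieldType) (R : Type) (f : R -> F) (z : R) (finj : injective f) (fz : f z = 0)
  (l c : F) (M : 'M[R]_2) : l != 0 -> l *: map_mx f M = c%:M ->
  [/\ M 0 1 = z, M 1 0 = z & M 0 0 = M 1 1].
Proof.
move=> hl h.
have ent i j : l * f (M i j) = (c%:M : 'M[F]_2) i j by rewrite -h !mxE.
have e0 i j : i != j -> M i j = z.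
  move=> hij; apply: finj; rewrite fz; apply/eqP.
  have := ent i j; rewrite mxE (negbTE hij) mulr0n => /eqP.
  by rewrite mulf_eq0 (negbTE hl).
split; [exact: e0 | exact: e0 |].
apply: finj; apply: (mulfI hl); by rewrite !ent !mxE.
Qed.

Lemma scal_entries2 (R : idomainType) (p q : R) (A N : 'M[R]_2) : p != 0 -> q != 0 ->
  A 0 1 = 0 -> A 1 0 = 0 -> A 0 0 = A 1 1 -> p *: A = q *: N ->
  [/\ N 0 1 = 0, N 1 0 = 0 & N 0 0 = N 1 1].
Proof.
move=> hp hq a01 a10 a00 h.
have ent i j : q * N i j = p * A i j.
  by have := congr1 (fun M : 'M[R]_2 => M i j) h; rewrite !mxE.
split.
- by apply/eqP; move: (ent 0 1); rewrite a01 mulr0 => /eqP; rewrite mulf_eq0 (negbTE hq).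
- by apply/eqP; move: (ent 1 0); rewrite a10 mulr0 => /eqP; rewrite mulf_eq0 (negbTE hq).
- by apply: (mulfI hq); rewrite !ent a00.
Qed.

Lemma tf_inj : injective tf.
Proof. by move=> p q /eqP; rewrite tofrac_eq => /eqP. Qed.

Theorem lemma3p14 (w : seq (bool * bool)) :
  trivial_in_PGL2 (wordMu w) -> trivial_in_PSL2Z (wordZ w).
Proof.
move=> [c hc].
have [l0 hl e] := wordMu_eq w.
rewrite e in hc.
have [m01 m10 m00] := scal_entries tf_inj (rmorph0 _) hl hc.
have [p [q [hp hq hpq]]] := rho_inv w.
have [n01 n10 n00] := scal_entries2 hp hq (A := map_mx ev (PW w))
  ltac:(by rewrite mxE m01 /horner_eval horner0) ltac:(by rewrite mxE m10 /horner_eval horner0)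
  ltac:(by rewrite !mxE m00) hpq.
have hnf := pingpong (red_nf w) n01 n10 n00.
have [k hk ->] := wordZ_nf w.
rewrite hnf /Ez /=.
have : (k - 1) * (k + 1) = 0 by rewrite mulrDr !mulrBl hk; ring.
move/eqP; rewrite mulf_eq0 subr_eq0 addr_eq0 => /orP[]/eqP ->.
- by left; rewrite scale1r.
- by right; rewrite scaleN1r.
Qed.
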